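(* Let $t\neq|$ be a tree of $\mathcal{A}$ such that $\Delta(t)=|\otimes t+t\otimes|$. Then $t$ is a corolla, i.e. its only internal vertex is the root vertex.
   Context: Trees: planar rooted trees in which every internal vertex has at least two children; the root vertex hangs from a trunk edge; leaves are edges without upper vertex; $|$ is the tree with one leaf and no internal vertex. $\mathcal{A}$ is the vector space over a field $\mathbb K$ with basis all such trees, with its tridendriform products (Loday–Ronco free tridendriform algebra on $Y=|\vee|$; $x_0\vee\cdots\vee x_k$ grafts trees on a new root; for $x=x^{(0)}\vee\cdots\vee x^{(k)}$, $y=y^{(0)}\vee\cdots\vee y^{(l)}$: $x\prec y=x^{(0)}\vee\cdots\vee x^{(k-1)}\vee(x^{(k)}*y)$, $x\cdot y=x^{(0)}\vee\cdots\vee x^{(k-1)}\vee(x^{(k)}*y^{(0)})\vee y^{(1)}\vee\cdots\vee y^{(l)}$, $x\succ y=(x*y^{(0)})\vee y^{(1)}\vee\cdots\vee y^{(l)}$, $*=\prec+\cdot+\succ$, $|*z=z*|=z$). $\Delta$ is the coproduct $\Delta(|)=|\otimes|$, $\Delta(t)=\sum_{c}G^c(t)\otimes P^c(t)$ over admissible cuts $c$ of $t$: an internal edge joins two internal vertices; a cut is a nonempty set of internal edges, plus the empty cut and the total cut (below the root); admissible means every root-to-leaf path meets at most one chosen edge. Removing the edges gives $P^c(t)$ (the component containing the root) and trees $G^c_1(t),\dots,G^c_m(t)$ from left to right, $G^c(t)=G^c_1(t)*\cdots*G^c_m(t)$; empty cut: $P^c=t$, $G^c=|$; total cut: $P^c=|$,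 $G^c=t$. *)

(* Defs.v *)
From HB Require Import structures.
From Stdlib Require List.
From mathcomp Require Import all_boot all_algebra.
Set Implicit Arguments. Unset Strict Implicit. Unset Printing Implicit Defensive.
Import GRing.Theory.

(* Planar rooted trees.  [Node l] is a vertex whose children (left to right)
   are the trees of [l]; [Node [::]] is the tree | (a single leaf, no internal
   vertex).  A tree [Node l] with [l <> [::]] has root vertex of arity
   [size l]; a child equal to [Leaf] is a leaf edge. *)
Inductive tree : Type := Node of seq tree.

Definition Leaf : tree := Node [::].

Definition children (t : tree) : seq tree := let: Node l := t in l.

Fixpoint tree_ind' (P : tree -> Prop)
  (H : forall l, (forall x, Stdlib.Lists.List.In x l -> P x) -> P (Node l)) (t : tree) : P t :=
  match t with
  | Node l => H l ((fix go (l : seq tree) : forall x, Stdlib.Lists.List.In x l -> P x :=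
                    match l with
                    | [::] => fun x (hx : Stdlib.Lists.List.In x [::]) => False_ind _ hx
                    | a :: r => fun x hx =>
                        match hx with
                        | or_introl e => eq_ind a P (tree_ind' H a) x e
                        | or_intror h => go r x h
                        end
                    end) l)
  end.

Fixpoint tree_eqb (x y : tree) : bool :=
  match x, y with
  | Node l1, Node l2 =>
      (fix aux (l1 l2 : seq tree) : bool :=
         match l1, l2 with
         | [::], [::] => true
         | a :: r, b :: s => tree_eqb a b && aux r s
         | _, _ => false
         end) l1 l2
  end.

Lemma tree_eqb_iff (x y : tree) : tree_eqb x y <-> x = y.
Proof.
elim/tree_ind': x y => l IH [l'] /=.
elim: l l' IH => [|a r IHr] [|b s] IH /=; try by split.
have /IH ha : Stdlib.Lists.List.In a (a :: r) by left.
have IH' : forall x, Stdlib.Lists.List.In x r ->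
    forall y, tree_eqb x y <-> x = y.
  by move=> x hx; apply: IH; right.
split.
  case/andP=> h1 h2.
  have e1 := (ha b).1 h1; have e2 := (IHr s IH').1 h2.
  by case: e2 => ->; rewrite e1.
case=> e1 e2; apply/andP; split; first exact: (ha b).2.
by apply: (IHr s IH').2; rewrite e2.
Qed.

Lemma tree_eqbP : Equality.axiom tree_eqb.
Proof. move=> x y; apply: (iffP idP) => h; [exact: (tree_eqb_iff x y).1 | exact: (tree_eqb_iff x y).2]. Qed.

HB.instance Definition _ := hasDecEq.Build tree tree_eqbP.

Fixpoint valid (t : tree) : bool :=
  let: Node l := t in (nilp l || (2 <= size l)) && all valid l.

Fixpoint tsize (t : tree) : nat :=
  let: Node l := t in (sumn (map tsize l)).+1.

(* Tridendriform total product  x * y = x < y + x . y + x > y,  returned as a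
   formal sum of trees (a list, multiplicities = repetitions).  The fuel is
   always sufficient when started at tsize x + tsize y (each recursive call
   decreases the total size). *)
Fixpoint mulf (n : nat) (x y : tree) : seq tree :=
  match n with
  | 0 => [::]
  | n'.+1 =>
    match x, y with
    | Node [::], _ => [:: y]
    | _, Node [::] => [:: x]
    | Node (x0 :: xr), Node (y0 :: yr) =>
        let init := belast x0 xr in
        let xk := last x0 xr in
           [seq Node (rcons init z) | z <- mulf n' xk y]
        ++ [seq Node (init ++ z :: yr) | z <- mulf n' xk y0]
        ++ [seq Node (z :: yr) | z <- mulf n' x y0]
    end
  end.

Definition tmul (x y : tree) : seq tree := mulf (tsize x + tsize y) x y.

Definition mulS (a b : seq tree) : seq tree :=
  flatten [seq tmul x y | x <- a, y <- b].

Definition Gprod (gs : seq tree) : seq tree :=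
  foldr (fun g acc => mulS [:: g] acc) [:: Leaf] gs.

(* [sub t] enumerates, each exactly once, the admissible sets of internal
   edges of t lying above the root vertex (including the empty set), as pairs
   (list of the cut-off trees G_1..G_m from left to right, the root part P).
   Cutting an internal edge leaves that edge as a leaf of P and as the trunk
   of the cut-off tree. *)
Fixpoint sub (t : tree) : seq (seq tree * tree) :=
  let: Node l := t in
  [seq (gp.1, Node gp.2) | gp <-
    (fix go (l : seq tree) : seq (seq tree * seq tree) :=
       match l with
       | [::] => [:: ([::], [::])]
       | c :: r =>
           [seq (a.1 ++ b.1, a.2 :: b.2)
              | a <- (if nilp (children c) then [::] else [:: ([:: c], Leaf)])
                     ++ sub c,
                b <- go r]
       end) l].

(* all admissible cuts of t: for t = |, only the cut giving | (x) |;
   otherwise the cuts above the root (incl. the empty cut) and the total cut *)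
Definition cuts (t : tree) : seq (seq tree * tree) :=
  if t == Leaf then [:: ([::], Leaf)] else sub t ++ [:: ([:: t], Leaf)].

(* coefficient of the basis element u (x) v of A (x) A in Delta(t) =
   sum_c G^c(t) (x) P^c(t) *)
Definition delta_coef (K : fieldType) (t u v : tree) : K :=
  \sum_(c <- cuts t) ((count_mem u (Gprod c.1))%:R * (c.2 == v)%:R).

Definition is_corolla (t : tree) : Prop :=
  exists l : seq tree, t = Node l /\ l <> [::] /\ all (fun c => c == Leaf) l.

(* Main.v *)
Require Import Defs.
From mathcomp Require Import all_boot all_algebra.
Import GRing.Theory.
Local Open Scope ring_scope.

Definition opt (c : tree) : seq (seq tree * tree) :=
  if nilp (children c) then [::] else [:: ([:: c], Leaf)].
Definition optsub c := opt c ++ sub c.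
Fixpoint subl (l : seq tree) : seq (seq tree * seq tree) :=
  match l with
  | [::] => [:: ([::], [::])]
  | c :: r => [seq (a.1 ++ b.1, a.2 :: b.2) | a <- optsub c, b <- subl r]
  end.

Lemma sub_eq l : sub (Node l) = [seq (gp.1, Node gp.2) | gp <- subl l].
Proof. rewrite /=; congr map; elim: l => //= c r ->; done. Qed.

Lemma allpairs_filter (A B C : Type) (f : A -> B -> C) (p : pred C)
  (p1 : pred A) (p2 : pred B) s t :
  (forall x y, p (f x y) = p1 x && p2 y) ->
  filter p [seq f x y | x <- s, y <- t] = [seq f x y | x <- filter p1 s, y <- filter p2 t].
Proof.
move=> hp; elim: s => //= x s IH.
rewrite filter_cat IH filter_map.
have -> : filter (preim (f x) p) t = if p1 x then filter p2 t else [::].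
  case h: (p1 x).
    by apply: eq_filter => y /=; rewrite hp h.
  by elim: t {IH} => //= y t ->; rewrite hp h.
by case: (p1 x).
Qed.

Lemma map_filter_node (s : seq (seq tree * seq tree)) l' :
  filter (fun e : seq tree * tree => e.2 == Node l') [seq (gp.1, Node gp.2) | gp <- s]
  = [seq (gp.1, Node gp.2) | gp <- filter (fun gp : seq tree * seq tree => gp.2 == l') s].
Proof.
rewrite filter_map; congr map; apply: eq_filter => gp /=.
by apply/eqP/eqP => [[]|->].
Qed.

Lemma cons_pred (x : tree) r (a : seq tree * tree) (b : seq tree * seq tree) :
  ((a.1 ++ b.1, a.2 :: b.2).2 == x :: r) = (a.2 == x) && (b.2 == r).
Proof. by rewrite /= eqseq_cons. Qed.

Lemma optsub_self x :
  filter (fun e : seq tree * tree => e.2 == x) (sub x) = [:: ([::], x)] ->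
  filter (fun e : seq tree * tree => e.2 == x) (optsub x) = [:: ([::], x)].
Proof.
move=> H; rewrite /optsub filter_cat H /opt.
case: x H => [[|y ys]] //= _.
Qed.

Lemma sub_self x : filter (fun e : seq tree * tree => e.2 == x) (sub x) = [:: ([::], x)].
Proof.
elim/tree_ind': x => l IH.
rewrite sub_eq map_filter_node.
suff -> : filter (fun gp : seq tree * seq tree => gp.2 == l) (subl l) = [:: ([::], l)] by [].
elim: l IH => //= x r IHr IH.
rewrite (allpairs_filter _ _ _ _ _ (fun a : seq tree * tree => a.2 == x)
          (fun b : seq tree * seq tree => b.2 == r)); last by move=> a b; apply: cons_pred.
rewrite optsub_self; last by apply: IH; left.
rewrite IHr //; move=> y hy; apply: IH; by right.
Qed.

Lemma subl_size l gp : gp \in subl l -> size gp.2 = size l.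
Proof.
elim: l gp => [|x r IH] gp /=; first by rewrite inE => /eqP ->.
case/allpairsP => [[a b] [_ hb ->]] /=.
by rewrite (IH _ hb).
Qed.

Lemma optsub_cut c : c != Leaf ->
  filter (fun e : seq tree * tree => e.2 == Leaf) (optsub c) = [:: ([:: c], Leaf)].
Proof.
case: c => [[|y ys]] // _.
have E : filter (fun e : seq tree * tree => e.2 == Leaf) (sub (Node (y :: ys))) = [::].
  apply/eqP; apply/negPn; rewrite -has_filter; apply/hasPn => e.
  rewrite sub_eq => /mapP [gp gpin ->] /=.
  apply/negP => /eqP [] h.
  by move: (subl_size _ _ gpin); rewrite h.
by rewrite /optsub filter_cat E /opt /=.
Qed.

Lemma main_filter pre c post : c != Leaf ->
  filter (fun gp : seq tree * seq tree => gp.2 == pre ++ Leaf :: post)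
    (subl (pre ++ c :: post)) = [:: ([:: c], pre ++ Leaf :: post)].
Proof.
move=> hc; elim: pre => [|x pre IH] /=.
  rewrite (allpairs_filter _ _ _ _ _ (fun a : seq tree * tree => a.2 == Leaf)
          (fun b : seq tree * seq tree => b.2 == post)); last by move=> a b; apply: cons_pred.
  rewrite optsub_cut //.
  have -> : filter (fun b : seq tree * seq tree => b.2 == post) (subl post) = [:: ([::], post)].
    have := sub_self (Node post); rewrite sub_eq map_filter_node.
    by case: (filter _ _) => [|[g p] [|]] //= [] -> ->.
  by [].
rewrite (allpairs_filter _ _ _ _ _ (fun a : seq tree * tree => a.2 == x)
          (fun b : seq tree * seq tree => b.2 == pre ++ Leaf :: post)); last by move=> a b; apply: cons_pred.
by rewrite optsub_self ?sub_self // IH.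
Qed.

Theorem mainTheorem7 (K : fieldType) (t : tree) :
  valid t -> t <> Leaf ->
  (forall u v : tree, valid u -> valid v ->
     delta_coef K t u v =
       ((u == Leaf) && (v == t))%:R + ((u == t) && (v == Leaf))%:R) ->
  is_corolla t.
Proof.
case: t => l vt tnl H.
case: (boolP (all (fun c => c == Leaf) l)) => [al|].
  exists l; split => //; split => // l0; apply: tnl; by rewrite l0.
case/allPn => c cin cnl; exfalso.
case/splitPr: cin vt tnl H => pre post vt tnl H.
set v := Node (pre ++ Leaf :: post).
move: vt => /= /andP [hs ha]; rewrite all_cat /= in ha.
case/and3P: ha => hpre hc hpost.
have vv : valid v.
  by move: hs; rewrite /= all_cat /= hpre hpost andbT /nilp !size_cat /= andbT.
have vnl : (v == Leaf) = false by apply/eqP => -[] /(congr1 size); rewrite size_cat addnS.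
have := H c v hc vv.
rewrite (negbTE cnl) vnl /= andbF addr0.
rewrite /delta_coef /cuts.
have /negbTE -> : Node (pre ++ c :: post) != Leaf by apply/eqP.
rewrite sub_eq big_cat big_cons big_nil /= eq_sym vnl mulr0 !addr0.
rewrite (eq_bigr (fun e => if e.2 == v then (count_mem c (Gprod e.1))%:R else 0));
  last by move=> e _; case: (_ == _); rewrite ?mulr1 ?mulr0.
rewrite -big_mkcond -big_filter map_filter_node main_filter //.
rewrite /= big_cons big_nil addr0.
case: c cnl {H hc tnl hs} => [[|y ys]] // _.
rewrite /Gprod /= /mulS /tmul /= eqxx addn0.
move/eqP; rewrite oner_eq0 //.
Qed.
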